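(* Let $T:\mathbb N\to\mathbb N$ satisfy $T(n)\ge n$ for all $n$. For a well-typed program $p$ and input $\tilde v$ write $n=\mathrm{sz}(\tilde v)$. The following three statements are equivalent: (1) every well-typed CorePolyC program $p$ satisfies $\mathrm{ic}(p,\tilde v)=O(T(n))$; (2) every well-typed CorePolyC program $p$ satisfies $\mathrm{sz}([\![p]\!](\tilde v))=O(T(n))$; (3) every well-typed CorePolyC program $p$ satisfies $\mathrm{sz}(\mathscr E_{p,\tilde v})=O(T(n))$. (Here the constants in $O(\cdot)$ may depend on $p$ but not on $\tilde v$.)
   Context: CorePolyC. Types are $\mathtt{iint},\mathtt{int},\mathtt{bool}$; $\mathsf{Int}=\{\mathtt{iint},\mathtt{int}\}$, ordered by $\mathtt{iint}\preccurlyeq\mathtt{int}$. Values are unbounded integers ($\mathbb Z$) and booleans $\#t,\#f$. Expressions: variables $x$; constants (nonempty decimal digit strings denoting natural numbers; $\mathtt{true}$, $\mathtt{false}$); operator applications $\mathtt{op}(e_1,\dots,e_m)$; parenthesized $(e)$. Operators and semantics: unary $-$ (negation); binary $+,-,/,\%$ (integer addition, subtraction, division, remainder, with division and remainder by $0$ returning $0$); $\mathtt{size}$, with $\mathtt{size}(v)=\lceil\log_2(\mathrm{abs}(v)+1)\rceil$; comparisons $\texttt{>=},\texttt{<=},\texttt{>},\texttt{<},\texttt{==},\texttt{!=}$ on integers returning booleans; boolean $\texttt{!},\texttt{\&\&},\texttt{||}$. Statements: declaration $t\ x;$; assignment $x=e;$; block $\{s_1\dots s_m\}$; conditional $\mathbf{if}(e)\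 s_1\ \mathbf{else}\ s_2$; loop $\mathbf{for}(x<\mathtt{size}(e))\ s$ (loop bounds are always syntactically of the form $\mathtt{size}(e)$). A program is $\mathbf{int\ main}(\mathbf{int}\ x_1,\dots,\mathbf{int}\ x_m)\{s_1\dots s_k\ \mathbf{return}\ e;\}$. Semantics (big-step). A store $\Sigma$ is a finite partial map from variables to values; $\Sigma[x\mapsto v]$ is the update. $\Sigma\vdash e\Downarrow v$: a variable $x\in\mathrm{dom}\,\Sigma$ evaluates to $\Sigma(x)$, constants to their value, $\mathtt{op}(e_1,\dots,e_m)$ to $\mathtt{op}$ applied to the values of the $e_i$. $\Sigma\vdash s\Downarrow\Sigma'$: $t\ x;$ gives $\Sigma[x\mapsto 0]$ if $t\in\mathsf{Int}$ and $\Sigma[x\mapsto\#f]$ if $t=\mathtt{bool}$; $x=e;$ (with $x\in\mathrm{dom}\,\Sigma$) gives $\Sigma[x\mapsto v]$ where $\Sigma\vdash e\Downarrow v$; a sequence or block executes its statements in order threading the store (a block returns the final store); a conditional evaluates its guard to a boolean and executes the corresponding branch; $\mathbf{for}(x<e)\ s$ evaluates $e$ once to an integer $i$, sets $\Sigma_0=\Sigma$, executes $s$ from $\Sigma_j[x\mapsto j]$ obtaining $\Sigma_{j+1}$ for $j=0,\dots,i-1$, and ends in $\Sigma_i$ (i.e. in $\Sigma$ if $i\le 0$). A program on inputs $v_1,\dots,v_m$ runs its statements from the store $[x_1\mapsto v_1,\dots,x_m\mapsto v_m]$ and outputs the value of its return expression in the resulting store. Type system. A typing environment $\Gamma$ is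 a finite partial map from variables to types; $\ell\in\{\#t,\#f\}$ is the loop indicator. Expression typing $\Gamma,\ell\vdash e:t$: a variable $x\in\mathrm{dom}\,\Gamma$ has type $\Gamma(x)$; digit literals have type $\mathtt{iint}$, $\mathtt{true},\mathtt{false}$ have type $\mathtt{bool}$; $\texttt{!},\texttt{\&\&},\texttt{||}$ take $\mathtt{bool}$ arguments to $\mathtt{bool}$; comparisons take arguments with types in $\mathsf{Int}$ to $\mathtt{bool}$; $+,-,/,\%$ take arguments with types in $\mathsf{Int}$ to their supremum under $\preccurlyeq$ ($\mathtt{iint}$ iff all arguments are $\mathtt{iint}$); $\mathtt{size}$ takes only an $\mathtt{iint}$ argument, giving $\mathtt{iint}$; parentheses preserve types. Statement typing $\Gamma,\ell\vdash s:\Gamma'$: $t\ x;$ is typable iff $x\notin\mathrm{dom}\,\Gamma$ and not($\ell=\#t$ and $t=\mathtt{iint}$), giving $\Gamma[x\mapsto t]$; $x=e;$ is typable iff $x\in\mathrm{dom}\,\Gamma$, not($\ell=\#t$ and $\Gamma(x)=\mathtt{iint}$), and $\Gamma,\ell\vdash e:t$ with $t,\Gamma(x)$ both in $\mathsf{Int}$ or both $\mathtt{bool}$, giving $\Gamma$; a sequence $s_1\dots s_m$ threads $\Gamma_0=\Gamma$, $\Gamma_{i-1},\ell\vdash s_i:\Gamma_i$, giving $\Gamma_m$; a block $\{\tilde s\}$ is typable if its sequence is, giving $\Gamma$; a conditional needs a guard of type $\mathtt{bool}$ and both branches typable under $\Gamma,\ell$, giving $\Gamma$; $\mathbf{for}(x<e)\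 s$ needs $\Gamma,\ell\vdash e:\mathtt{iint}$, $x\notin\mathrm{dom}\,\Gamma$, and $\Gamma[x\mapsto\mathtt{iint}],\#t\vdash s:\Gamma'$ for some $\Gamma'$, giving $\Gamma$. A program is well-typed if its statements are typable starting from $[x_1\mapsto\mathtt{int},\dots,x_m\mapsto\mathtt{int}]$ with $\ell=\#f$, ending in some $\Gamma'$, and its return expression has a type in $\mathsf{Int}$ under $\Gamma',\#f$. A well-typed program $p$ with $m$ inputs computes a total function $[\![p]\!]:\mathbb Z^m\to\mathbb Z$. Sizes: $\mathrm{sz}(v)=\lceil\log_2(\mathrm{abs}(v)+1)\rceil$ for $v\in\mathbb Z$, $\mathrm{sz}(\#t)=\mathrm{sz}(\#f)=1$, $\mathrm{sz}(v_1,\dots,v_m)=\sum_i\mathrm{sz}(v_i)$, and $\mathrm{sz}(\Sigma)=\max_{x\in\mathrm{dom}\,\Sigma}\mathrm{sz}(\Sigma(x))$ ($0$ if empty). $\mathscr E_{p,\tilde v}$ is the (unique) semantic derivation tree of the run of $p$ on input $\tilde v$, and $\mathrm{sz}(\mathscr E_{p,\tilde v})$ is the maximum of $\mathrm{sz}(\Sigma')$ over all stores $\Sigma'$ occurring in it (the largest intermediate value). Instruction count (cost semantics) $\mathrm{ic}$: a variable or constant costs $1$; a parenthesized expression costs $1$ plus its content; $\mathtt{op}(e_1,\dots,e_m)$ costs $1$ plus the costs of the $e_i$; a declaration costs $1$; an assignment costs $1$ plus the cost of its expression; a block costs $1$ plus the cost of its sequence; a sequence costs the sum of its statements' costs; a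 conditional costs the guard's cost plus the cost of the executed branch; a loop costs the cost of evaluating its bound plus the sum of the costs of all executed iterations of its body; a program costs its statements' cost plus the cost of its return expression. $\mathrm{ic}(p,\tilde v)$ is the cost of running $p$ on $\tilde v$. *)

(* Defs.v *)
From Stdlib Require Import ZArith List Arith Lia.
Import ListNotations.
Open Scope Z_scope.

Definition var := nat.

Inductive ty := TIint | TInt | TBool.
Inductive val := VInt (z : Z) | VBool (b : bool).

Inductive unop := UNeg | USize | UNot.
Inductive binop := BAdd | BSub | BDiv | BMod
  | BGe | BLe | BGt | BLt | BEq | BNe | BAnd | BOr.

Inductive expr :=
| EVar (x : var)
| ENum (n : nat)
| ETrue | EFalse
| EUn (o : unop) (e : expr)
| EBin (o : binop) (e1 e2 : expr)
| EParen (e : expr).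

Inductive stmt :=
| SDecl (t : ty) (x : var)
| SAssign (x : var) (e : expr)
| SBlock (ss : list stmt)
| SIf (e : expr) (s1 s2 : stmt)
| SFor (x : var) (e : expr) (s : stmt).   (* for (x < size(e)) s *)

Record program := Program {
  params : list var;
  body : list stmt;
  ret : expr }.

Definition zsize (v : Z) : Z := Z.log2_up (Z.abs v + 1).
Definition sz_z (v : Z) : nat := Z.to_nat (zsize v).
Definition sz_val (v : val) : nat :=
  match v with VInt z => sz_z z | VBool _ => 1%nat end.
Definition sz_inputs (vs : list Z) : nat := fold_right (fun v acc => (sz_z v + acc)%nat) 0%nat vs.

(* ---------- stores: finite partial maps as duplicate-free association lists ---------- *)
Definition store := list (var * val).
Fixpoint lookup (S : store) (x : var) : option val :=
  match S with
  | [] => None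
  | (y, v) :: S' => if Nat.eqb x y then Some v else lookup S' x
  end.
Definition upd (S : store) (x : var) (v : val) : store :=
  (x, v) :: filter (fun p => negb (Nat.eqb (fst p) x)) S.
Definition sz_store (S : store) : nat :=
  fold_right (fun p acc => Nat.max (sz_val (snd p)) acc) 0%nat S.

Definition eval_unop (o : unop) (v : val) : option val :=
  match o, v with
  | UNeg, VInt z => Some (VInt (- z))
  | USize, VInt z => Some (VInt (zsize z))
  | UNot, VBool b => Some (VBool (negb b))
  | _, _ => None
  end.

Definition eval_binop (o : binop) (v1 v2 : val) : option val :=
  match o, v1, v2 with
  | BAdd, VInt a, VInt b => Some (VInt (a + b))
  | BSub, VInt a, VInt b => Some (VInt (a - b))
  | BDiv, VInt a, VInt b => Some (VInt (if b =? 0 then 0 else Z.quot a b))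
  | BMod, VInt a, VInt b => Some (VInt (if b =? 0 then 0 else Z.rem a b))
  | BGe, VInt a, VInt b => Some (VBool (b <=? a))
  | BLe, VInt a, VInt b => Some (VBool (a <=? b))
  | BGt, VInt a, VInt b => Some (VBool (b <? a))
  | BLt, VInt a, VInt b => Some (VBool (a <? b))
  | BEq, VInt a, VInt b => Some (VBool (a =? b))
  | BNe, VInt a, VInt b => Some (VBool (negb (a =? b)))
  | BAnd, VBool a, VBool b => Some (VBool (a && b))
  | BOr, VBool a, VBool b => Some (VBool (a || b))
  | _, _, _ => None
  end.

Inductive eval : store -> expr -> val -> Prop :=
| ev_var S x v : lookup S x = Some v -> eval S (EVar x) v
| ev_num S n : eval S (ENum n) (VInt (Z.of_nat n))
| ev_true S : eval S ETrue (VBool true)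
| ev_false S : eval S EFalse (VBool false)
| ev_un S o e v w : eval S e v -> eval_unop o v = Some w -> eval S (EUn o e) w
| ev_bin S o e1 e2 v1 v2 w : eval S e1 v1 -> eval S e2 v2 ->
    eval_binop o v1 v2 = Some w -> eval S (EBin o e1 e2) w
| ev_paren S e v : eval S e v -> eval S (EParen e) v.

Fixpoint ic_expr (e : expr) : nat :=
  match e with
  | EVar _ | ENum _ | ETrue | EFalse => 1
  | EUn _ e => 1 + ic_expr e
  | EBin _ e1 e2 => 1 + ic_expr e1 + ic_expr e2
  | EParen e => 1 + ic_expr e
  end.

Definition default_val (t : ty) : val :=
  match t with TBool => VBool false | _ => VInt 0 end.

(* ---------- big-step statement semantics ----------
   exec S s S' c m : S |- s ⇓ S', the run costs c instructions, and m is the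
   maximum of sz over all stores occurring in the derivation tree. *)
Inductive exec : store -> stmt -> store -> nat -> nat -> Prop :=
| ex_decl S t x :
    exec S (SDecl t x) (upd S x (default_val t)) 1
         (Nat.max (sz_store S) (sz_store (upd S x (default_val t))))
| ex_assign S x e v :
    lookup S x <> None -> eval S e v ->
    exec S (SAssign x e) (upd S x v) (1 + ic_expr e)
         (Nat.max (sz_store S) (sz_store (upd S x v)))
| ex_block S ss S' c m :
    exec_seq S ss S' c m -> exec S (SBlock ss) S' (1 + c) m
| ex_if S e b s1 s2 S' c m :
    eval S e (VBool b) -> exec S (if b then s1 else s2) S' c m ->
    exec S (SIf e s1 s2) S' (ic_expr e + c) (Nat.max (sz_store S) m)
| ex_for S x e s z S' c m :
    eval S (EUn USize e) (VInt z) ->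
    exec_loop S x s 0 (Z.to_nat z) S' c m ->
    exec S (SFor x e s) S' (ic_expr (EUn USize e) + c) (Nat.max (sz_store S) m)
with exec_seq : store -> list stmt -> store -> nat -> nat -> Prop :=
| exs_nil S : exec_seq S [] S 0 (sz_store S)
| exs_cons S s ss S1 S2 c1 c2 m1 m2 :
    exec S s S1 c1 m1 -> exec_seq S1 ss S2 c2 m2 ->
    exec_seq S (s :: ss) S2 (c1 + c2) (Nat.max m1 m2)
(* exec_loop S_j x s j i S_i c m : iterations j, ..., i-1 of the loop body *)
with exec_loop : store -> var -> stmt -> nat -> nat -> store -> nat -> nat -> Prop :=
| exl_done S x s j i : (i <= j)%nat -> exec_loop S x s j i S 0 (sz_store S)
| exl_step S x s j i S1 S2 c1 c2 m1 m2 : (j < i)%nat ->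
    exec (upd S x (VInt (Z.of_nat j))) s S1 c1 m1 ->
    exec_loop S1 x s (Datatypes.S j) i S2 c2 m2 ->
    exec_loop S x s j i S2 (c1 + c2) (Nat.max (sz_store S) (Nat.max m1 m2)).

Definition init_store (xs : list var) (vs : list Z) : store :=
  fold_left (fun S p => upd S (fst p) (VInt (snd p))) (combine xs vs) [].

(* run p vs out c m : on input vs, p outputs out, with ic(p,vs) = c and
   sz(E_{p,vs}) = m. *)
Inductive run (p : program) (vs : list Z) : Z -> nat -> nat -> Prop :=
| run_intro S' c m out :
    exec_seq (init_store (params p) vs) (body p) S' c m ->
    eval S' (ret p) (VInt out) ->
    run p vs out (c + ic_expr (ret p)) m.

Definition tenv := var -> option ty.
Definition tupd (G : tenv) (x : var) (t : ty) : tenv :=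
  fun y => if Nat.eqb y x then Some t else G y.
Definition is_int (t : ty) : Prop := t = TIint \/ t = TInt.
Definition sup (t1 t2 : ty) : ty :=
  match t1, t2 with TIint, TIint => TIint | _, _ => TInt end.
Definition is_arith (o : binop) : bool :=
  match o with BAdd | BSub | BDiv | BMod => true | _ => false end.
Definition is_cmp (o : binop) : bool :=
  match o with BGe | BLe | BGt | BLt | BEq | BNe => true | _ => false end.
Definition is_bool_op (o : binop) : bool :=
  match o with BAnd | BOr => true | _ => false end.

Inductive ty_expr : tenv -> bool -> expr -> ty -> Prop :=
| te_var G l x t : G x = Some t -> ty_expr G l (EVar x) t
| te_num G l n : ty_expr G l (ENum n) TIint
| te_true G l : ty_expr G l ETrue TBool
| te_false G l : ty_expr G l EFalse TBool
| te_not G l e : ty_expr G l e TBool -> ty_expr G l (EUn UNot e) TBool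
| te_neg G l e t : ty_expr G l e t -> is_int t -> ty_expr G l (EUn UNeg e) t
| te_size G l e : ty_expr G l e TIint -> ty_expr G l (EUn USize e) TIint
| te_arith G l o e1 e2 t1 t2 : is_arith o = true ->
    ty_expr G l e1 t1 -> ty_expr G l e2 t2 -> is_int t1 -> is_int t2 ->
    ty_expr G l (EBin o e1 e2) (sup t1 t2)
| te_cmp G l o e1 e2 t1 t2 : is_cmp o = true ->
    ty_expr G l e1 t1 -> ty_expr G l e2 t2 -> is_int t1 -> is_int t2 ->
    ty_expr G l (EBin o e1 e2) TBool
| te_bool G l o e1 e2 : is_bool_op o = true ->
    ty_expr G l e1 TBool -> ty_expr G l e2 TBool ->
    ty_expr G l (EBin o e1 e2) TBool
| te_paren G l e t : ty_expr G l e t -> ty_expr G l (EParen e) t.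

Definition compat (t1 t2 : ty) : Prop :=
  (is_int t1 /\ is_int t2) \/ (t1 = TBool /\ t2 = TBool).

Inductive ty_stmt : tenv -> bool -> stmt -> tenv -> Prop :=
| ts_decl G l t x : G x = None -> ~ (l = true /\ t = TIint) ->
    ty_stmt G l (SDecl t x) (tupd G x t)
| ts_assign G l x e tx t : G x = Some tx -> ~ (l = true /\ tx = TIint) ->
    ty_expr G l e t -> compat t tx -> ty_stmt G l (SAssign x e) G
| ts_block G l ss G' : ty_seq G l ss G' -> ty_stmt G l (SBlock ss) G
| ts_if G l e s1 s2 G1 G2 : ty_expr G l e TBool ->
    ty_stmt G l s1 G1 -> ty_stmt G l s2 G2 -> ty_stmt G l (SIf e s1 s2) G
| ts_for G l x e s G' : ty_expr G l (EUn USize e) TIint -> G x = None ->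
    ty_stmt (tupd G x TIint) true s G' -> ty_stmt G l (SFor x e s) G
with ty_seq : tenv -> bool -> list stmt -> tenv -> Prop :=
| tss_nil G l : ty_seq G l [] G
| tss_cons G l s ss G1 G2 : ty_stmt G l s G1 -> ty_seq G1 l ss G2 ->
    ty_seq G l (s :: ss) G2.

Definition init_tenv (xs : list var) : tenv :=
  fun y => if existsb (Nat.eqb y) xs then Some TInt else None.

Definition well_typed (p : program) : Prop :=
  exists G' t, ty_seq (init_tenv (params p)) false (body p) G' /\
    ty_expr G' false (ret p) t /\ is_int t.

Definition ic_bounded (T : nat -> nat) : Prop :=
  forall p, well_typed p -> exists c n0 : nat, forall vs out ic m,
    length vs = length (params p) -> (n0 <= sz_inputs vs)%nat ->
    run p vs out ic m -> (ic <= c * T (sz_inputs vs))%nat.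

Definition out_bounded (T : nat -> nat) : Prop :=
  forall p, well_typed p -> exists c n0 : nat, forall vs out ic m,
    length vs = length (params p) -> (n0 <= sz_inputs vs)%nat ->
    run p vs out ic m -> (sz_z out <= c * T (sz_inputs vs))%nat.

Definition deriv_bounded (T : nat -> nat) : Prop :=
  forall p, well_typed p -> exists c n0 : nat, forall vs out ic m,
    length vs = length (params p) -> (n0 <= sz_inputs vs)%nat ->
    run p vs out ic m -> (m <= c * T (sz_inputs vs))%nat.

(* Main.v *)
Require Import Defs.
From Stdlib Require Import ZArith List Arith Lia.
Import ListNotations.
Open Scope Z_scope.

Lemma szZ a : Z.of_nat (sz_z a) = zsize a.
Proof. unfold sz_z, zsize. rewrite Z2Nat.id; auto using Z.log2_up_nonneg. Qed.

Lemma zsize_nonneg a : 0 <= zsize a.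
Proof. apply Z.log2_up_nonneg. Qed.

Lemma log2_up_lin n : 0 <= n -> Z.log2_up (n + 1) <= n.
Proof.
  intros Hn. destruct (Z.eq_dec n 0) as [->|Hne]. simpl. reflexivity.
  rewrite Z.log2_up_eqn by lia. replace (Z.pred (n+1)) with n by lia.
  pose proof (Z.log2_lt_lin n). lia.
Qed.

Lemma sz_mono a b : Z.abs a <= Z.abs b -> (sz_z a <= sz_z b)%nat.
Proof.
  intros H. pose proof (szZ a); pose proof (szZ b). unfold zsize in *.
  pose proof (Z.log2_up_le_mono (Z.abs a + 1) (Z.abs b + 1)). lia.
Qed.

Lemma sz_sum a b c : Z.abs c <= Z.abs a + Z.abs b ->
  (sz_z c <= Nat.max (sz_z a) (sz_z b) + 1)%nat.
Proof.
  intros H. pose proof (szZ a); pose proof (szZ b); pose proof (szZ c).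
  unfold zsize in *.
  assert (Hm : forall x y, Z.abs x <= Z.abs y ->
     Z.log2_up (Z.abs c + 1) <= Z.log2_up (Z.abs y + 1) + 1 -> True) by auto.
  destruct (Z.le_ge_cases (Z.abs a) (Z.abs b)).
  - assert (Z.log2_up (Z.abs c + 1) <= Z.log2_up (Z.abs b + 1) + 1).
    { eapply Z.le_trans. apply Z.log2_up_le_mono with (b := (Z.abs b + 1) * 2 ^ 1). lia.
      rewrite Z.log2_up_mul_pow2 by lia. lia. }
    pose proof (Z.log2_up_le_mono (Z.abs a + 1) (Z.abs b + 1)). lia.
  - assert (Z.log2_up (Z.abs c + 1) <= Z.log2_up (Z.abs a + 1) + 1).
    { eapply Z.le_trans. apply Z.log2_up_le_mono with (b := (Z.abs a + 1) * 2 ^ 1). lia.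
      rewrite Z.log2_up_mul_pow2 by lia. lia. }
    pose proof (Z.log2_up_le_mono (Z.abs b + 1) (Z.abs a + 1)). lia.
Qed.

Lemma sz_size a : (sz_z (zsize a) <= sz_z a)%nat.
Proof.
  apply sz_mono. pose proof (zsize_nonneg a). unfold zsize in *.
  pose proof (log2_up_lin (Z.abs a)). lia.
Qed.

Lemma sz_nat (j : nat) : (sz_z (Z.of_nat j) <= j)%nat.
Proof.
  pose proof (szZ (Z.of_nat j)). unfold zsize in *.
  pose proof (log2_up_lin (Z.abs (Z.of_nat j))). lia.
Qed.

Lemma sz_quot a b : b <> 0 -> (sz_z (Z.quot a b) <= sz_z a)%nat.
Proof.
  intros Hb. apply sz_mono. rewrite <- Z.quot_abs by auto.
  apply Z.quot_le_upper_bound. lia. nia.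
Qed.

Lemma sz_rem a b : b <> 0 -> (sz_z (Z.rem a b) <= sz_z a)%nat.
Proof.
  intros Hb. apply sz_mono. rewrite <- Z.rem_abs by auto.
  apply Z.rem_le; lia.
Qed.

Lemma sz_pow k : (k <= sz_z (2 ^ Z.of_nat k))%nat.
Proof.
  pose proof (szZ (2 ^ Z.of_nat k)). unfold zsize in *.
  rewrite Z.abs_eq in H by (apply Z.pow_nonneg; lia).
  pose proof (Z.log2_up_le_mono (2 ^ Z.of_nat k) (2 ^ Z.of_nat k + 1)).
  rewrite Z.log2_up_pow2 in H0 by lia. lia.
Qed.

Lemma lookup_filter S x y : y <> x ->
  lookup (filter (fun p => negb (Nat.eqb (fst p) x)) S) y = lookup S y.
Proof.
  intros H. induction S as [|[z w] S IH]; simpl; auto.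
  destruct (Nat.eqb_spec z x); simpl.
  - subst. destruct (Nat.eqb_spec y x); [lia|auto].
  - destruct (y =? z)%nat; auto.
Qed.

Lemma lookup_upd S x v y :
  lookup (upd S x v) y = if Nat.eqb y x then Some v else lookup S y.
Proof.
  unfold upd. simpl. destruct (Nat.eqb_spec y x); auto. apply lookup_filter; auto.
Qed.

Lemma sz_filter S x :
  (sz_store (filter (fun p => negb (Nat.eqb (fst p) x)) S) <= sz_store S)%nat.
Proof.
  induction S as [|[z w] S IH]; simpl; auto.
  destruct (negb (z =? x)%nat); simpl; lia.
Qed.

Lemma sz_upd S x v : (sz_store (upd S x v) <= Nat.max (sz_val v) (sz_store S))%nat.
Proof. unfold upd. simpl. pose proof (sz_filter S x). lia. Qed.

Lemma sz_lookup S x v : lookup S x = Some v -> (sz_val v <= sz_store S)%nat.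
Proof.
  induction S as [|[z w] S IH]; simpl; try discriminate.
  destruct (x =? z)%nat; intros H. inversion H; subst; simpl; lia.
  specialize (IH H); lia.
Qed.

Fixpoint gsz (e : expr) : nat :=
  match e with
  | EVar _ => 0
  | ENum n => sz_z (Z.of_nat n)
  | ETrue | EFalse => 1
  | EUn _ e => 1 + gsz e
  | EBin _ e1 e2 => 1 + Nat.max (gsz e1) (gsz e2)
  | EParen e => gsz e
  end.

Lemma eval_sz S e v : eval S e v -> (sz_val v <= sz_store S + gsz e)%nat.
Proof.
  induction 1; simpl.
  - apply sz_lookup in H; lia.
  - lia.
  - lia.
  - lia.
  - destruct o, v; simpl in H0; inversion H0; subst; simpl in *; try lia.
    + assert (Z.abs (-z) <= Z.abs z) by (rewrite Z.abs_opp; lia).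
      pose proof (sz_mono (- z) z H1). lia.
    + pose proof (sz_size z). lia.
  - destruct o, v1, v2; simpl in H1; inversion H1; subst; simpl in *; try lia.
    + assert (Z.abs (z + z0) <= Z.abs z + Z.abs z0) by lia.
      pose proof (sz_sum z z0 (z + z0) H2). lia.
    + assert (Z.abs (z - z0) <= Z.abs z + Z.abs z0) by lia.
      pose proof (sz_sum z z0 (z - z0) H2). lia.
    + destruct (Z.eqb_spec z0 0). change (sz_z 0) with 0%nat. lia. pose proof (sz_quot z z0 n). lia.
    + destruct (Z.eqb_spec z0 0). change (sz_z 0) with 0%nat. lia. pose proof (sz_rem z z0 n). lia.
  - lia.
Qed.

Scheme exec_ind' := Minimality for exec Sort Prop
with exec_seq_ind' := Minimality for exec_seq Sort Prop
with exec_loop_ind' := Minimality for exec_loop Sort Prop.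
Combined Scheme exec_mut from exec_ind', exec_seq_ind', exec_loop_ind'.

Fixpoint ks (s : stmt) : nat :=
  match s with
  | SDecl _ _ => 0
  | SAssign _ e => gsz e
  | SBlock ss => (fix go l := match l with [] => 0%nat | s :: l => Nat.max (ks s) (go l) end) ss
  | SIf _ s1 s2 => Nat.max (ks s1) (ks s2)
  | SFor _ e s => Nat.max (gsz e) (ks s)
  end.
Definition kseq := fix go l := match l with [] => 0%nat | s :: l => Nat.max (ks s) (go l) end.

Lemma store_le :
  (forall S s S' c m, exec S s S' c m -> (sz_store S <= m /\ sz_store S' <= m)%nat) /\
  (forall S ss S' c m, exec_seq S ss S' c m -> (sz_store S <= m /\ sz_store S' <= m)%nat) /\
  (forall S x s j i S' c m, exec_loop S x s j i S' c m -> (sz_store S <= m /\ sz_store S' <= m)%nat).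
Proof.
  apply exec_mut; intros; lia.
Qed.

Lemma growth :
  (forall S s S' c m, exec S s S' c m -> forall K, (ks s <= K)%nat -> (1 <= K)%nat ->
     (m <= sz_store S + K * c /\ sz_store S' <= sz_store S + K * c)%nat) /\
  (forall S ss S' c m, exec_seq S ss S' c m -> forall K, (kseq ss <= K)%nat -> (1 <= K)%nat ->
     (m <= sz_store S + K * c /\ sz_store S' <= sz_store S + K * c)%nat) /\
  (forall S x s j i S' c m, exec_loop S x s j i S' c m -> forall K B, (ks s <= K)%nat -> (1 <= K)%nat ->
     (forall j', (j' < i)%nat -> (sz_z (Z.of_nat j') <= B)%nat) ->
     (m <= Nat.max (sz_store S) B + K * c /\ sz_store S' <= Nat.max (sz_store S) B + K * c)%nat).
Proof.
  apply exec_mut.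
  - intros S t x K HK H1. pose proof (sz_upd S x (default_val t)).
    assert (sz_val (default_val t) <= 1)%nat by (destruct t; simpl; try lia; change (sz_z 0) with 0%nat; lia).
    nia.
  - intros S x e v Hl He K HK H1. simpl in HK. pose proof (sz_upd S x v).
    pose proof (eval_sz _ _ _ He). nia.
  - intros S ss S' c m Hs IH K HK H1. simpl in HK. destruct (IH K HK H1). nia.
  - intros S e b s1 s2 S' c m He Hs IH K HK H1. simpl in HK.
    destruct (IH K) as [A B]. destruct b; lia. lia.
    assert (1 <= ic_expr e)%nat by (destruct e; simpl; lia). nia.
  - intros S x e s z S' c m He Hl IH K HK H1. simpl in HK.
    inversion He; subst. destruct v; simpl in H5; inversion H5; subst.
    pose proof (eval_sz _ _ _ H3) as Hz. simpl in Hz.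
    destruct (IH K (sz_store S + gsz e)%nat) as [A B]; [lia|lia| |].
    { intros j' Hj. pose proof (sz_nat j'). change (Z.to_nat (zsize z0)) with (sz_z z0) in Hj. lia. }
    simpl. nia.
  - intros; lia.
  - intros S s ss S1 S2 c1 c2 m1 m2 _ IH1 _ IH2 K HK H1. simpl in HK.
    destruct (IH1 K) as [A B]; try lia. destruct (IH2 K) as [C D]; try lia.
  - intros; lia.
  - intros S x s j i S1 S2 c1 c2 m1 m2 Hji _ IH1 _ IH2 K B HK H1 HB.
    pose proof (sz_upd S x (VInt (Z.of_nat j))). pose proof (HB j Hji). simpl in *.
    destruct (IH1 K) as [A1 B1]; try lia. destruct (IH2 K B) as [A2 B2]; try lia; auto.
    
Qed.

Scheme ty_stmt_ind' := Minimality for ty_stmt Sort Prop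
with ty_seq_ind' := Minimality for ty_seq Sort Prop.
Combined Scheme ty_mut from ty_stmt_ind', ty_seq_ind'.

Fixpoint maxv_e (e : expr) : nat :=
  match e with
  | EVar x => x
  | ENum _ | ETrue | EFalse => 0
  | EUn _ e => maxv_e e
  | EBin _ e1 e2 => Nat.max (maxv_e e1) (maxv_e e2)
  | EParen e => maxv_e e
  end.

Fixpoint maxv_s (s : stmt) : nat :=
  match s with
  | SDecl _ x => x
  | SAssign x e => Nat.max x (maxv_e e)
  | SBlock ss => (fix go l := match l with [] => 0%nat | s :: l => Nat.max (maxv_s s) (go l) end) ss
  | SIf e s1 s2 => Nat.max (maxv_e e) (Nat.max (maxv_s s1) (maxv_s s2))
  | SFor x e s => Nat.max x (Nat.max (maxv_e e) (maxv_s s))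
  end.
Definition maxv_seq := fix go l := match l with [] => 0%nat | s :: l => Nat.max (maxv_s s) (go l) end.

Fixpoint Bs (s : stmt) : nat :=
  (match s with
  | SDecl _ _ => 1
  | SAssign _ e => 1 + ic_expr e
  | SBlock ss => 1 + (fix go l := match l with [] => 0%nat | s :: l => Bs s + go l end) ss
  | SIf e s1 s2 => ic_expr e + Bs s1 + Bs s2
  | SFor _ e s => ic_expr (EUn USize e) + Bs s
  end)%nat.
Definition Bseq := fix go l := match l with [] => 0%nat | s :: l => (Bs s + go l)%nat end.

Section Instr.
Variable cnt : var.

Definition dbl : stmt := SAssign cnt (EBin BAdd (EVar cnt) (EVar cnt)).

Fixpoint tr (s : stmt) : stmt :=
  match s with
  | SBlock ss => SBlock (map tr ss)
  | SIf e s1 s2 => SIf e (tr s1) (tr s2)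
  | SFor x e s => SFor x e (SBlock [tr s; dbl])
  | s => s
  end.

Lemma eval_agree S S2 e v : eval S e v ->
  (forall y, (y <= maxv_e e)%nat -> lookup S2 y = lookup S y) -> eval S2 e v.
Proof.
  induction 1; simpl; intros Hag.
  - constructor. rewrite Hag; auto.
  - constructor.
  - constructor.
  - constructor.
  - econstructor; eauto.
  - econstructor; [apply IHeval1 | apply IHeval2 |]; eauto; intros; apply Hag; lia.
  - constructor; auto.
Qed.

Lemma ty_agree G H l e t : ty_expr G l e t ->
  (forall y, (y <= maxv_e e)%nat -> H y = G y) -> ty_expr H l e t.
Proof.
  induction 1; simpl; intros Hag.
  - constructor. rewrite Hag; auto.
  - constructor.
  - constructor.
  - constructor.
  - constructor; auto.
  - constructor; auto.
  - constructor; auto.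
  - apply te_arith; auto; [apply IHty_expr1 | apply IHty_expr2]; intros; apply Hag; lia.
  - apply te_cmp with t1 t2; auto; [apply IHty_expr1 | apply IHty_expr2]; intros; apply Hag; lia.
  - apply te_bool; auto; [apply IHty_expr1 | apply IHty_expr2]; intros; apply Hag; lia.
  - constructor; auto.
Qed.

Definition rel (S2 S : store) := forall y, y <> cnt -> lookup S2 y = lookup S y.

Lemma rel_upd S2 S x v : rel S2 S -> rel (upd S2 x v) (upd S x v).
Proof. intros H y Hy. rewrite !lookup_upd. destruct (y =? x)%nat; auto. Qed.

Definition pw (k : nat) : Z := 2 ^ Z.of_nat k.

Lemma sim :
  (forall S s S' c m, exec S s S' c m -> forall S2 a, rel S2 S ->
     lookup S2 cnt = Some (VInt a) -> (maxv_s s < cnt)%nat ->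
     exists S2' c2 m2 k, exec S2 (tr s) S2' c2 m2 /\ rel S2' S' /\
       lookup S2' cnt = Some (VInt (a * pw k)) /\ (c <= Bs s * (1 + k))%nat) /\
  (forall S ss S' c m, exec_seq S ss S' c m -> forall S2 a, rel S2 S ->
     lookup S2 cnt = Some (VInt a) -> (maxv_seq ss < cnt)%nat ->
     exists S2' c2 m2 k, exec_seq S2 (map tr ss) S2' c2 m2 /\ rel S2' S' /\
       lookup S2' cnt = Some (VInt (a * pw k)) /\ (c <= Bseq ss * (1 + k))%nat) /\
  (forall S x s j i S' c m, exec_loop S x s j i S' c m -> forall S2 a, rel S2 S ->
     lookup S2 cnt = Some (VInt a) -> (maxv_s s < cnt)%nat -> (x < cnt)%nat ->
     exists S2' c2 m2 k, exec_loop S2 x (SBlock [tr s; dbl]) j i S2' c2 m2 /\ rel S2' S' /\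
       lookup S2' cnt = Some (VInt (a * pw k)) /\ (c <= Bs s * k)%nat).
Proof.
  apply exec_mut.
  - intros S t x S2 a Hr Hc Hm. simpl in Hm.
    do 3 eexists; exists 0%nat. split. constructor. split. apply rel_upd; auto.
    split. rewrite lookup_upd. destruct (Nat.eqb_spec cnt x). lia.
    rewrite Hc. unfold pw. simpl. rewrite Z.mul_1_r. reflexivity. simpl. lia.
  - intros S x e v Hl He S2 a Hr Hc Hm. simpl in Hm.
    do 3 eexists; exists 0%nat. split. constructor. rewrite Hr by lia. auto.
    apply (eval_agree S _ e v He). intros; apply Hr; lia.
    split. apply rel_upd; auto.
    split. rewrite lookup_upd. destruct (Nat.eqb_spec cnt x). lia.
    rewrite Hc. unfold pw. simpl. rewrite Z.mul_1_r. reflexivity. simpl. lia.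
  - intros S ss S' c m _ IH S2 a Hr Hc Hm.
    destruct (IH S2 a Hr Hc Hm) as (S2' & c2 & m2 & k & E & R & L & C).
    exists S2', (1 + c2)%nat, m2, k. split. constructor. exact E.
    split; auto. split; auto. change (Bs (SBlock ss)) with (1 + Bseq ss)%nat. nia.
  - intros S e b s1 s2 S' c m He _ IH S2 a Hr Hc Hm. simpl in Hm.
    destruct (IH S2 a Hr Hc) as (S2' & c2 & m2 & k & E & R & L & C). destruct b; lia.
    exists S2', (ic_expr e + c2)%nat, (Nat.max (sz_store S2) m2), k.
    split. simpl. eapply ex_if. apply (eval_agree S); eauto. intros; apply Hr; lia.
    destruct b; exact E.
    split; auto. split; auto. simpl. destruct b; nia.
  - intros S x e s z S' c m He _ IH S2 a Hr Hc Hm. simpl in Hm.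
    destruct (IH S2 a Hr Hc) as (S2' & c2 & m2 & k & E & R & L & C); try lia.
    exists S2', (ic_expr (EUn USize e) + c2)%nat, (Nat.max (sz_store S2) m2), k.
    split. simpl. eapply ex_for. apply (eval_agree S); eauto. intros; apply Hr; simpl in *; lia.
    exact E.
    split; auto. split; auto. simpl. simpl in C. nia.
  - intros S S2 a Hr Hc Hm. exists S2, 0%nat, (sz_store S2), 0%nat.
    split. constructor. split; auto. split. unfold pw; simpl. rewrite Z.mul_1_r; auto. lia.
  - intros S s ss S1 S2 c1 c2 m1 m2 _ IH1 _ IH2 S3 a Hr Hc Hm. simpl in Hm.
    destruct (IH1 S3 a Hr Hc) as (S3' & c3 & m3 & k1 & E1 & R1 & L1 & C1); try lia.
    destruct (IH2 S3' _ R1 L1) as (S4' & c4 & m4 & k2 & E2 & R2 & L2 & C2); try lia.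
    exists S4', (c3 + c4)%nat, (Nat.max m3 m4), (k1 + k2)%nat.
    split. simpl. econstructor; eauto. split; auto. split.
    rewrite L2. unfold pw. rewrite Nat2Z.inj_add, Z.pow_add_r by lia. f_equal. f_equal. ring.
    simpl. nia.
  - intros S x s j i Hij S2 a Hr Hc Hm Hx. exists S2, 0%nat, (sz_store S2), 0%nat.
    split. constructor; auto. split; auto. split. unfold pw; simpl. rewrite Z.mul_1_r; auto. lia.
  - intros S x s j i S1 S2 c1 c2 m1 m2 Hji _ IH1 _ IH2 S3 a Hr Hc Hm Hx.
    destruct (IH1 (upd S3 x (VInt (Z.of_nat j))) a) as (S3' & c3 & m3 & k1 & E1 & R1 & L1 & C1); auto.
    apply rel_upd; auto. rewrite lookup_upd. destruct (Nat.eqb_spec cnt x). lia. auto.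
    set (a2 := a * pw k1).
    set (S4 := upd S3' cnt (VInt (a2 + a2))).
    assert (R4 : rel S4 S1). { intros y Hy. unfold S4. rewrite lookup_upd.
      destruct (Nat.eqb_spec y cnt). lia. auto. }
    destruct (IH2 S4 (a2 + a2) R4) as (S5 & c5 & m5 & k2 & E2 & R2 & L2 & C2); auto.
    unfold S4. rewrite lookup_upd, Nat.eqb_refl. auto.
    exists S5, ((1 + (c3 + (1 + ic_expr (EBin BAdd (EVar cnt) (EVar cnt)) + 0))) + c5)%nat,
      (Nat.max (sz_store S3) (Nat.max (Nat.max m3 (Nat.max (Nat.max (sz_store S3') (sz_store S4)) (sz_store S4))) m5)),
      (1 + k1 + k2)%nat.
    split. econstructor; auto. constructor. econstructor. exact E1.
    econstructor. unfold dbl. constructor. rewrite L1; discriminate.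
    eapply ev_bin; [constructor; exact L1 | constructor; exact L1 | reflexivity]. constructor. exact E2.
    split; auto. split.
    rewrite L2. unfold a2, pw. rewrite !Nat2Z.inj_add, !Z.pow_add_r by lia. f_equal. f_equal.
    change (2 ^ Z.of_nat 1) with 2. ring.
    nia.
Qed.

Lemma ty_sim :
  (forall G l s G', ty_stmt G l s G' -> forall H, (forall y, y <> cnt -> H y = G y) ->
     H cnt = Some TInt -> (maxv_s s < cnt)%nat ->
     exists H', ty_stmt H l (tr s) H' /\ (forall y, y <> cnt -> H' y = G' y) /\ H' cnt = Some TInt) /\
  (forall G l ss G', ty_seq G l ss G' -> forall H, (forall y, y <> cnt -> H y = G y) ->
     H cnt = Some TInt -> (maxv_seq ss < cnt)%nat ->
     exists H', ty_seq H l (map tr ss) H' /\ (forall y, y <> cnt -> H' y = G' y) /\ H' cnt = Some TInt).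
Proof.
  apply ty_mut.
  - intros G l t x Hx Hn H Ha Hc Hm. simpl in Hm. exists (tupd H x t). split.
    constructor; auto. rewrite Ha by lia. auto.
    split. intros y Hy. unfold tupd. destruct (y =? x)%nat; auto.
    unfold tupd. destruct (Nat.eqb_spec cnt x). lia. auto.
  - intros G l x e tx t Hx Hn Ht Hcp H Ha Hc Hm. simpl in Hm. exists H. split.
    econstructor; eauto. rewrite Ha by lia. eauto.
    apply (ty_agree G); auto. intros; apply Ha; lia.
    split; auto.
  - intros G l ss G' _ IH H Ha Hc Hm.
    destruct (IH H Ha Hc Hm) as (H' & T & _ & _). exists H. split; auto. econstructor; eauto.
  - intros G l e s1 s2 G1 G2 Te _ IH1 _ IH2 H Ha Hc Hm. simpl in Hm.
    destruct (IH1 H Ha Hc) as (H1 & T1 & _); try lia.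
    destruct (IH2 H Ha Hc) as (H2 & T2 & _); try lia.
    exists H. split; auto. econstructor; eauto. apply (ty_agree G); auto. intros; apply Ha; lia.
  - intros G l x e s G' Te Hx _ IH H Ha Hc Hm. simpl in Hm.
    destruct (IH (tupd H x TIint)) as (H1 & T1 & A1 & C1); try lia.
    { intros y Hy. unfold tupd. destruct (y =? x)%nat; auto. }
    { unfold tupd. destruct (Nat.eqb_spec cnt x). lia. auto. }
    exists H. split; auto. simpl. econstructor.
    apply (ty_agree G); auto. intros; apply Ha; simpl in *; lia.
    rewrite Ha by lia. auto.
    econstructor. econstructor. exact T1. econstructor.
    unfold dbl. eapply ts_assign with (tx := TInt) (t := TInt). exact C1.
    intros [_ ?]; discriminate.
    apply (te_arith H1 true BAdd (EVar cnt) (EVar cnt) TInt TInt); auto; try (constructor; auto); right; auto.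
    left; split; right; auto. constructor.
  - intros G l H Ha Hc Hm. exists H. split. constructor. auto.
  - intros G l s ss G1 G2 _ IH1 _ IH2 H Ha Hc Hm. simpl in Hm.
    destruct (IH1 H Ha Hc) as (H1 & T1 & A1 & C1); try lia.
    destruct (IH2 H1 A1 C1) as (H2 & T2 & A2 & C2); try lia.
    exists H2. split; auto. econstructor; eauto.
Qed.

End Instr.

Lemma init_sz xs vs S :
  (sz_store (fold_left (fun S p => upd S (fst p) (VInt (snd p))) (combine xs vs) S)
   <= sz_store S + sz_inputs vs)%nat.
Proof.
  revert vs S. induction xs as [|x xs IH]; intros vs S; simpl. lia.
  destruct vs as [|v vs]; simpl. lia.
  specialize (IH vs (upd S x (VInt v))). pose proof (sz_upd S x (VInt v)). simpl in *. lia.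
Qed.

Lemma init_sz' xs vs : (sz_store (init_store xs vs) <= sz_inputs vs)%nat.
Proof. unfold init_store. pose proof (init_sz xs vs []). simpl in H. lia. Qed.

Lemma l13 T (hT : forall n, (n <= T n)%nat) : ic_bounded T -> deriv_bounded T.
Proof.
  intros H p Hp. destruct (H p Hp) as (c & n0 & B).
  set (K := Nat.max 1 (kseq (body p))).
  exists (1 + K * c)%nat, n0. intros vs out ic m Hl Hn Hr.
  specialize (B vs out ic m Hl Hn Hr). inversion Hr; subst.
  destruct (proj1 (proj2 growth) _ _ _ _ _ H0 K) as [A _]; try lia.
  pose proof (init_sz' (params p) vs). pose proof (hT (sz_inputs vs)). nia.
Qed.

Lemma l32 T (hT : forall n, (n <= T n)%nat) : deriv_bounded T -> out_bounded T.
Proof.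
  intros H p Hp. destruct (H p Hp) as (c & n0 & B).
  exists (c + gsz (ret p))%nat, (Nat.max n0 1). intros vs out ic m Hl Hn Hr.
  specialize (B vs out ic m Hl ltac:(lia) Hr). inversion Hr; subst.
  destruct (proj1 (proj2 store_le) _ _ _ _ _ H0) as [_ A].
  pose proof (eval_sz _ _ _ H1). simpl in H2.
  pose proof (hT (sz_inputs vs)). nia.
Qed.

Lemma existsb_fresh cnt xs : (list_max xs < cnt)%nat -> existsb (Nat.eqb cnt) xs = false.
Proof.
  induction xs as [|x xs IH]; simpl; auto. intros H.
  destruct (Nat.eqb_spec cnt x). lia. apply IH. lia.
Qed.

Lemma l21 T (hT : forall n, (n <= T n)%nat) : out_bounded T -> ic_bounded T.
Proof.
  intros H p Hp.
  set (cnt := Datatypes.S (Nat.max (maxv_seq (body p)) (list_max (params p)))).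
  set (p' := Program (params p) (SDecl TInt cnt :: SAssign cnt (ENum 1) :: map (tr cnt) (body p)) (EVar cnt)).
  assert (Hnone : init_tenv (params p) cnt = None).
  { unfold init_tenv. rewrite existsb_fresh. auto. unfold cnt. lia. }
  assert (Hp' : well_typed p').
  { destruct Hp as (G' & t & Ts & Te & Ti).
    set (G1 := tupd (init_tenv (params p)) cnt TInt).
    destruct (proj2 (ty_sim cnt) _ _ _ _ Ts G1) as (H' & T' & A' & C').
    { intros y Hy. unfold G1, tupd. destruct (Nat.eqb_spec y cnt). lia. auto. }
    { unfold G1, tupd. rewrite Nat.eqb_refl. auto. }
    { unfold cnt. lia. }
    exists H', TInt. split; [|split].
    - simpl. econstructor. constructor. exact Hnone. intros [? _]; discriminate.
      econstructor. eapply ts_assign with (tx := TInt) (t := TIint).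
      unfold tupd. rewrite Nat.eqb_refl. auto. intros [? _]; discriminate.
      constructor. left; split; [left|right]; auto.
      exact T'.
    - simpl. constructor. auto.
    - right; auto. }
  destruct (H p' Hp') as (c' & n0 & B).
  exists (Bseq (body p) * (1 + c') + ic_expr (ret p))%nat, (Nat.max n0 1).
  intros vs out ic m Hl Hn Hr. inversion Hr; subst.
  set (S0 := init_store (params p) vs) in *.
  set (S2 := upd (upd S0 cnt (default_val TInt)) cnt (VInt (Z.of_nat 1))).
  destruct (proj1 (proj2 (sim cnt)) _ _ _ _ _ H0 S2 1) as (S2' & c2 & m2 & k & E & R & L & C).
  { intros y Hy. unfold S2. rewrite !lookup_upd. destruct (Nat.eqb_spec y cnt). lia. auto. }
  { unfold S2. rewrite lookup_upd, Nat.eqb_refl. auto. }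
  { unfold cnt. lia. }
  assert (Hrun : exists ic' m', run p' vs (1 * pw k) ic' m').
  { do 2 eexists. econstructor. simpl. fold S0.
    econstructor. constructor. econstructor. econstructor.
    rewrite lookup_upd, Nat.eqb_refl. discriminate. constructor.
    exact E. constructor. exact L. }
  destruct Hrun as (ic' & m' & Hrun).
  specialize (B vs _ _ _ Hl ltac:(lia) Hrun).
  rewrite Z.mul_1_l in B. pose proof (sz_pow k) as Hk. change (2 ^ Z.of_nat k) with (pw k) in Hk.
  pose proof (hT (sz_inputs vs)) as HT.
  set (Tn := T (sz_inputs vs)) in *. set (Bb := Bseq (body p)) in *.
  assert (Bb * k <= Bb * (c' * Tn))%nat by (apply Nat.mul_le_mono_l; lia).
  assert (1 <= Tn)%nat by lia.
  assert (Bb <= Bb * Tn)%nat by nia.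
  assert (ic_expr (ret p) <= ic_expr (ret p) * Tn)%nat by nia.
  nia.
Qed.

Theorem lemma3 (T : nat -> nat) (hT : forall n, (n <= T n)%nat) :
  (ic_bounded T <-> out_bounded T) /\ (out_bounded T <-> deriv_bounded T).
Proof.
  pose proof (l13 T hT). pose proof (l32 T hT). pose proof (l21 T hT). tauto.
Qed.
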